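(* Let $w_1,\dots,w_n$ be positive integers with $\sum_{i\in[n]}w_i=3t+1$ for some integer $t$, and let $g$ be a positive integer such that the adjustment $f_g$ is $t$-bounded for $(w_1,\dots,w_n)$. Set $d_i=f_g(w_i)/g$ for $i\in[n]$. Then for every partition $(A,B)$ of $[n]$ (i.e. $A\cup B=[n]$, $A\cap B=\emptyset$) with $\sum_{i\in A}w_i>2\sum_{i\in B}w_i$, it holds that $\sum_{i\in A}d_i>\sum_{i\in B}d_i$; that is, $(w_1,\dots,w_n)\mapsto(d_1,\dots,d_n)$ is a qualified allocation.
   Context: For a positive integer $g$, the adjustment $f_g$ maps a positive integer $w$ to $w-(w\bmod g)$ if $w\bmod g<g/2$, and to $w+g-(w\bmod g)$ otherwise; thus $f_g(w)$ is a non-negative multiple of $g$. The adjustment $f_g$ is called $t$-bounded for $(w_1,\dots,w_n)$ if $\sum_{i\in[n]}|w_i-f_g(w_i)|\le t$. A map sending $(w_1,\dots,w_n)$ to non-negative integers $(d_1,\dots,d_n)$ is a qualified allocation if for every partition $(A,B)$ of $[n]$ with $\sum_{i\in A}w_i>2\sum_{i\in B}w_i$ one has $\sum_{i\in A}d_i>\sum_{i\in B}d_i$. *)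

(* Defs.v *)
From mathcomp Require Import all_boot.
Set Implicit Arguments. Unset Strict Implicit. Unset Printing Implicit Defensive.

(* The adjustment f_g: rounds w to a multiple of g.
   "w mod g < g/2" (rational comparison) is written as 2 * (w %% g) < g. *)
Definition adjust (g w : nat) : nat :=
  if 2 * (w %% g) < g then w - w %% g else w + g - w %% g.

Definition t_bounded (n : nat) (g t : nat) (w : 'I_n -> nat) : Prop :=
  \sum_(i < n) (maxn (w i) (adjust g (w i)) - minn (w i) (adjust g (w i))) <= t.

Definition qualified_allocation (n : nat) (w d : 'I_n -> nat) : Prop :=
  forall A B : {set 'I_n}, A :|: B = [set: 'I_n] -> A :&: B = set0 ->
    \sum_(i in A) w i > 2 * \sum_(i in B) w i ->
    \sum_(i in A) d i > \sum_(i in B) d i.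

(* Main.v *)
Require Import Defs.
From mathcomp Require Import all_boot.
From mathcomp Require Import zify.

Lemma adjust_mul g w : 0 < g -> adjust g w = adjust g w %/ g * g.
Proof.
move=> g0; rewrite /adjust; case: ifP => _.
- have -> : w - w %% g = w %/ g * g.
    have E := divn_eq w g; move: (w %/ g) (w %% g) E => q r E; lia.
  by rewrite mulnK.
- have h : w %% g < g by rewrite ltn_mod.
  have -> : w + g - w %% g = (w %/ g).+1 * g.
    have E := divn_eq w g; move: (w %/ g) (w %% g) E h => q r E h; rewrite mulSn; lia.
  by rewrite mulnK.
Qed.

Lemma split_sum {n} {A B : {set 'I_n}} (F : 'I_n -> nat) :
  A :|: B = [set: 'I_n] -> A :&: B = set0 ->
  \sum_(i < n) F i = \sum_(i in A) F i + \sum_(i in B) F i.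
Proof.
move=> hU hI.
have hB : B = ~: A.
  apply/setP => i; rewrite inE.
  move/setP/(_ i): hU; move/setP/(_ i): hI.
  rewrite !inE; case: (i \in A); case: (i \in B) => //.
rewrite hB (bigID (fun i => i \in A)) /=.
congr (_ + _); apply: eq_bigl => i; by rewrite ?inE.
Qed.

Theorem mainTheorem3 (n : nat) (w : 'I_n -> nat) (t g : nat) :
  (forall i, 0 < w i) ->
  \sum_(i < n) w i = 3 * t + 1 ->
  0 < g ->
  t_bounded g t w ->
  qualified_allocation w (fun i => adjust g (w i) %/ g).
Proof.
move=> _ hsum g0; rewrite /t_bounded => hb A B hU hI hAB.
set f := fun i => adjust g (w i).
set e := fun i => maxn (w i) (f i) - minn (w i) (f i).
have hW := split_sum w hU hI.
have hE := split_sum e hU hI.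
have h1 : \sum_(i in A) w i <= \sum_(i in A) f i + \sum_(i in A) e i.
  rewrite -big_split /=; apply: leq_sum => i _; rewrite /e; lia.
have h2 : \sum_(i in B) f i <= \sum_(i in B) w i + \sum_(i in B) e i.
  rewrite -big_split /=; apply: leq_sum => i _; rewrite /e; lia.
have hF : \sum_(i in B) f i < \sum_(i in A) f i.
  have hb' : \sum_(i < n) e i <= t := hb.
  rewrite hE in hb'; rewrite hW in hsum; clear hb.
  move: (\sum_(i in A) w i) (\sum_(i in B) w i) (\sum_(i in A) f i)
    (\sum_(i in B) f i) (\sum_(i in A) e i) (\sum_(i in B) e i)
    hb' hsum hAB h1 h2 => a b c d x y; lia.
rewrite -(ltn_pmul2r g0) !big_distrl /=.
have E : forall P : pred 'I_n, \sum_(i | P i) (adjust g (w i) %/ g * g) = \sum_(i | P i) f i.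
  by move=> P; apply: eq_bigr => i _; rewrite /f -adjust_mul.
by rewrite !E.
Qed.
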